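(* Let $\mathcal{A}$ be a finite-dimensional $\mathbb{C}^*$-weak Hopf algebra, $\rho:\mathcal{A}\to M_{d_\rho}(\mathbb{C})$ a $*$-representation and $(v_{ij})_{1\le i,j\le d_v}$ a corepresentation with $S(v_{ij})=v_{ji}^*$. Define $P$ on $\mathbb{C}^{d_v}\otimes\mathbb{C}^{d_\rho}$ and $Q$ on $\mathbb{C}^{d_\rho}\otimes\mathbb{C}^{d_v}$ by $\langle i,a|P|j,b\rangle=\sum\epsilon(1_{(1)}v_{ij})\rho_{ab}(1_{(2)})$ and $\langle a,i|Q|b,j\rangle=\sum\rho_{ab}(1_{(1)})\epsilon(v_{ij}1_{(2)})$, where $\Delta(1)=\sum1_{(1)}\otimes1_{(2)}$. Then on $\mathbb{C}^{d_v}\otimes\mathbb{C}^{d_\rho}\otimes\mathbb{C}^{d_v}$ one has $(P\otimes\mathbb{1})(\mathbb{1}\otimes Q)=(\mathbb{1}\otimes Q)(P\otimes\mathbb{1})$, and on $\mathbb{C}^{d_\rho}\otimes\mathbb{C}^{d_v}\otimes\mathbb{C}^{d_\rho}$ one has $(Q\otimes\mathbb{1})(\mathbb{1}\otimes P)=(\mathbb{1}\otimes P)(Q\otimes\mathbb{1})$.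
   Context: A weak bialgebra is a finite-dimensional unital associative algebra and coassociative counital coalgebra with $\Delta(xy)=\Delta(x)\Delta(y)$, $\Delta^{(2)}(1)=(1\otimes\Delta(1))(\Delta(1)\otimes1)=(\Delta(1)\otimes1)(1\otimes\Delta(1))$ and $\epsilon(xyz)=\sum\epsilon(xy_{(1)})\epsilon(y_{(2)}z)=\sum\epsilon(xy_{(2)})\epsilon(y_{(1)}z)$. With $\epsilon_s(x)=\sum1_{(1)}\epsilon(x1_{(2)})$, $\epsilon_t(x)=\sum\epsilon(1_{(1)}x)1_{(2)}$, a weak Hopf algebra has a linear $S$ with $\sum S(x_{(1)})x_{(2)}=\epsilon_s(x)$, $\sum x_{(1)}S(x_{(2)})=\epsilon_t(x)$, $\sum S(x_{(1)})x_{(2)}S(x_{(3)})=S(x)$. A $\mathbb{C}^*$-weak Hopf algebra has an antilinear involution $*$ with $(xy)^*=y^*x^*$, $\Delta(x^* )=\Delta(x)^*$, and a faithful $*$-representation. A $*$-representation satisfies $\rho(x^* )=\rho(x)^\dagger$; a corepresentation satisfies $\Delta(v_{ij})=\sum_kv_{ik}\otimes v_{kj}$, $\epsilon(v_{ij})=\delta_{ij}$. *)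

(* Defs.v *)
From HB Require Import structures.
From mathcomp Require Import all_boot all_order all_algebra.
From mathcomp Require Import reals complex.
Set Implicit Arguments. Unset Strict Implicit. Unset Printing Implicit Defensive.
Import Order.TTheory GRing.Theory Num.Theory.
Local Open Scope ring_scope.

(* A finite-dimensional algebra A of dimension n is identified with 'rV[C]_n
   via a fixed basis e_0..e_{n-1}; A (x) A with 'M[C]_(n,n) (e_j (x) e_k is
   delta_mx j k) and A (x) A (x) A with {ffun 'I_n * 'I_n * 'I_n -> C}. *)

Section WHA.
Variables (R : realType) (n : nat).
Local Notation C := (R[i]).
Local Notation A := 'rV[C]_n.
Local Notation A2 := 'M[C]_(n, n).
Local Notation A3 := {ffun 'I_n * 'I_n * 'I_n -> C}.

Definition bvec (j : 'I_n) : A := delta_mx 0 j.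

Definition tens2 (a b : A) : A2 := \matrix_(p, q) (a 0 p * b 0 q).
Definition tens3 (a b c : A) : A3 := [ffun t => a 0 t.1.1 * b 0 t.1.2 * c 0 t.2].
Definition tens21 (X : A2) (c : A) : A3 := [ffun t => X t.1.1 t.1.2 * c 0 t.2].
Definition tens12 (a : A) (X : A2) : A3 := [ffun t => a 0 t.1.1 * X t.1.2 t.2].

Record WHAdata := {
  wmul : A -> A -> A;
  wone : A;
  wcomul : A -> A2;
  weps : A -> C;
  wS : A -> A;
  wstar : A -> A
}.

Variable W : WHAdata.
Local Notation mul := (wmul W).
Local Notation one := (wone W).
Local Notation Dl := (wcomul W).
Local Notation eps := (weps W).
Local Notation S := (wS W).
Local Notation star := (wstar W).

Definition mul2 (X Y : A2) : A2 :=
  \sum_(j < n) \sum_(k < n) \sum_(l < n) \sum_(m < n)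
    (X j k * Y l m) *: tens2 (mul (bvec j) (bvec l)) (mul (bvec k) (bvec m)).
Definition mul3 (T U : A3) : A3 :=
  \sum_(s : 'I_n * 'I_n * 'I_n) \sum_(u : 'I_n * 'I_n * 'I_n)
    (T s * U u) *: tens3 (mul (bvec s.1.1) (bvec u.1.1))
                         (mul (bvec s.1.2) (bvec u.1.2))
                         (mul (bvec s.2) (bvec u.2)).
Definition comulL (X : A2) : A3 :=
  \sum_(j < n) \sum_(k < n) X j k *: tens21 (Dl (bvec j)) (bvec k).
Definition comulR (X : A2) : A3 :=
  \sum_(j < n) \sum_(k < n) X j k *: tens12 (bvec j) (Dl (bvec k)).
Definition comul2 (x : A) : A3 := comulL (Dl x).

(* sums x_(1) (x) x_(2) are expanded over the basis: Delta x = sum X j k e_j(x)e_k *)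
Definition eps_s (x : A) : A :=
  \sum_(j < n) \sum_(k < n) (Dl one j k * eps (mul x (bvec k))) *: bvec j.
Definition eps_t (x : A) : A :=
  \sum_(j < n) \sum_(k < n) (Dl one j k * eps (mul (bvec j) x)) *: bvec k.

Definition star2 (X : A2) : A2 :=
  \sum_(j < n) \sum_(k < n) (X j k)^* *: tens2 (star (bvec j)) (star (bvec k)).

Definition is_algebra : Prop :=
  [/\ (forall x y z, mul (mul x y) z = mul x (mul y z)),
      (forall x, mul one x = x /\ mul x one = x),
      (forall a x y z, mul (a *: x + y) z = a *: mul x z + mul y z) &
      (forall a x y z, mul z (a *: x + y) = a *: mul z x + mul z y)].

Definition is_coalgebra : Prop :=
  [/\ linear Dl, linear eps,
      (forall x, comulL (Dl x) = comulR (Dl x)) &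
      (forall x, \row_(k < n) (\sum_(j < n) eps (bvec j) * Dl x j k) = x
                 /\ \row_(j < n) (\sum_(k < n) Dl x j k * eps (bvec k)) = x)].

Definition is_weak_bialgebra : Prop :=
  [/\ is_algebra /\ is_coalgebra,
      (forall x y, Dl (mul x y) = mul2 (Dl x) (Dl y)),
      comul2 one = mul3 (tens12 one (Dl one)) (tens21 (Dl one) one),
      comul2 one = mul3 (tens21 (Dl one) one) (tens12 one (Dl one)) &
      (forall x y z,
         eps (mul (mul x y) z)
           = \sum_(j < n) \sum_(k < n) Dl y j k * eps (mul x (bvec j)) * eps (mul (bvec k) z)
         /\ eps (mul (mul x y) z)
           = \sum_(j < n) \sum_(k < n) Dl y j k * eps (mul x (bvec k)) * eps (mul (bvec j) z))].

Definition is_weak_Hopf : Prop :=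
  [/\ is_weak_bialgebra, linear S,
      (forall x, \sum_(j < n) \sum_(k < n) Dl x j k *: mul (S (bvec j)) (bvec k) = eps_s x),
      (forall x, \sum_(j < n) \sum_(k < n) Dl x j k *: mul (bvec j) (S (bvec k)) = eps_t x) &
      (forall x, \sum_(t : 'I_n * 'I_n * 'I_n)
                   comul2 x t *: mul (mul (S (bvec t.1.1)) (bvec t.1.2)) (S (bvec t.2)) = S x)].

Definition adjmx d (M : 'M[C]_d) : 'M[C]_d := (map_mx (fun z => z^*) M)^T.

Definition is_star_rep d (rho : A -> 'M[C]_d) : Prop :=
  [/\ linear rho,
      (forall x y, rho (mul x y) = rho x *m rho y) &
      (forall x, rho (star x) = adjmx (rho x))].

Definition is_Cstar_WHA : Prop :=
  [/\ is_weak_Hopf /\ (forall a x y, star (a *: x + y) = a^* *: star x + star y),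
      (forall x, star (star x) = x),
      (forall x y, star (mul x y) = mul (star y) (star x)),
      (forall x, Dl (star x) = star2 (Dl x)) &
      exists d (rho : A -> 'M[C]_d), is_star_rep rho /\ injective rho].

Definition is_corep dv (v : 'I_dv -> 'I_dv -> A) : Prop :=
  forall i j, Dl (v i j) = \sum_(k < dv) tens2 (v i k) (v k j)
              /\ eps (v i j) = (i == j)%:R.

Definition Pop dv dr (v : 'I_dv -> 'I_dv -> A) (rho : A -> 'M[C]_dr)
  (x y : 'I_dv * 'I_dr) : C :=
  \sum_(p < n) \sum_(q < n)
     Dl one p q * eps (mul (bvec p) (v x.1 y.1)) * rho (bvec q) x.2 y.2.
Definition Qop dv dr (v : 'I_dv -> 'I_dv -> A) (rho : A -> 'M[C]_dr)
  (x y : 'I_dr * 'I_dv) : C :=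
  \sum_(p < n) \sum_(q < n)
     Dl one p q * rho (bvec p) x.1 y.1 * eps (mul (v x.2 y.2) (bvec q)).

End WHA.

Definition opcomp (R : realType) (T : finType) (X Y : T -> T -> R[i]) (x z : T) : R[i] :=
  \sum_(y : T) X x y * Y y z.

Definition op_tens_id (R : realType) (I J K : finType) (X : I * J -> I * J -> R[i])
  (x y : I * J * K) : R[i] := X x.1 y.1 * (x.2 == y.2)%:R.
Definition id_tens_op (R : realType) (I J K : finType) (X : J * K -> J * K -> R[i])
  (x y : I * J * K) : R[i] := (x.1.1 == y.1.1)%:R * X (x.1.2, x.2) (y.1.2, y.2).

(* Main.v *)
Require Import Defs.
From HB Require Import structures.
From mathcomp Require Import all_boot all_order all_algebra.
From mathcomp Require Import reals complex.
From mathcomp Require Import ring.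
Set Implicit Arguments. Unset Strict Implicit. Unset Printing Implicit Defensive.
Import GRing.Theory Num.Theory.
Local Open Scope ring_scope.

Section Gen.
Variables (R : realType) (n : nat).
Local Notation C := (R[i]).
Local Notation A := 'rV[C]_n.
Local Notation e := (@bvec R n).

Definition lin1 (h : A -> C) := forall a x y, h (a *: x + y) = a * h x + h y.

Lemma lin1_0 h : lin1 h -> h 0 = 0.
Proof.
move=> hl; have := hl 1 0 0; rewrite scaler0 addr0 mul1r => E.
by apply: (addrI (h 0)); rewrite addr0 -E.
Qed.

Lemma lin1_sum h I (r : seq I) (P : pred I) (F : I -> A) : lin1 h ->
  h (\sum_(i <- r | P i) F i) = \sum_(i <- r | P i) h (F i).
Proof.
move=> hl; elim/big_rec2: _ => [|i y1 y2 _ <-]; first exact: lin1_0.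
by rewrite -[F i in LHS]scale1r hl mul1r.
Qed.

Lemma lin1_scale h a x : lin1 h -> h (a *: x) = a * h x.
Proof. by move=> hl; rewrite -[_ *: _]addr0 hl lin1_0 // addr0. Qed.

Lemma expand h x : lin1 h -> h x = \sum_(j < n) x 0 j * h (e j).
Proof.
move=> hl; rewrite {1}(row_sum_delta x) lin1_sum //.
by apply: eq_bigr => j _; rewrite lin1_scale.
Qed.

Lemma sum_delta_l (I : finType) (c : I) (F : I -> C) :
  \sum_k (c == k)%:R * F k = F c.
Proof.
rewrite (bigD1 c) //= eqxx mul1r big1 ?addr0 // => k nk.
by rewrite eq_sym (negbTE nk) mul0r.
Qed.

Lemma sum_delta_r (I : finType) (c : I) (F : I -> C) :
  \sum_k F k * (c == k)%:R = F c.
Proof. rewrite -[RHS](sum_delta_l c); apply: eq_bigr => k _; exact: mulrC. Qed.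

Lemma fsum3 (I J K : finType) (F : I * J * K -> C) :
  \sum_t F t = \sum_i \sum_j \sum_k F ((i, j), k).
Proof.
have -> : \sum_i \sum_j \sum_k F ((i, j), k) = \sum_(ij : I * J) \sum_k F (ij, k).
  rewrite (pair_big _ _ (fun i j => \sum_k F ((i, j), k))).
  by apply: eq_big => [x //|i _]; rewrite -surjective_pairing.
symmetry; rewrite pair_big.
by apply: eq_big => [x //|i _]; rewrite -surjective_pairing.
Qed.

Lemma mul_sum2 (X Y : 'I_n -> 'I_n -> C) :
  (\sum_p \sum_q X p q) * (\sum_p' \sum_q' Y p' q')
  = \sum_p \sum_q \sum_p' \sum_q' X p q * Y p' q'.
Proof.
rewrite big_distrl; apply: eq_bigr => p _; rewrite big_distrl.
apply: eq_bigr => q _; rewrite big_distrr; apply: eq_bigr => p' _.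
by rewrite big_distrr.
Qed.

Lemma pull5 (I : finType) (F : I -> 'I_n -> 'I_n -> 'I_n -> 'I_n -> C) :
  \sum_k \sum_p \sum_q \sum_p' \sum_q' F k p q p' q'
  = \sum_p \sum_q \sum_p' \sum_q' \sum_k F k p q p' q'.
Proof.
rewrite exchange_big; apply: eq_bigr => p _.
rewrite exchange_big; apply: eq_bigr => q _.
rewrite exchange_big; apply: eq_bigr => p' _.
by rewrite exchange_big.
Qed.

Lemma swap22 (F : 'I_n -> 'I_n -> 'I_n -> 'I_n -> C) :
  \sum_p \sum_q \sum_p' \sum_q' F p q p' q'
  = \sum_p' \sum_q' \sum_p \sum_q F p q p' q'.
Proof.
under eq_bigr => p _ do rewrite exchange_big.
rewrite exchange_big; apply: eq_bigr => p' _.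
under eq_bigr => p _ do rewrite exchange_big.
by rewrite exchange_big.
Qed.


Lemma perm4 (F : 'I_n -> 'I_n -> 'I_n -> 'I_n -> C) :
  \sum_a \sum_b \sum_c \sum_d F a b c d
  = \sum_c \sum_d \sum_b \sum_a F a b c d.
Proof.
rewrite swap22; apply: eq_bigr => c _; apply: eq_bigr => d _.
by rewrite exchange_big.
Qed.

Lemma dist_coll (k b : C) (a c : 'I_n -> C) :
  k * ((\sum_x a x) * b * (\sum_y c y)) = \sum_x \sum_y k * (a x * b * c y).
Proof.
rewrite big_distrl big_distrl big_distrr; apply: eq_bigr => x _.
by rewrite big_distrr big_distrr.
Qed.

Lemma op1 (I J K : finType) (X : I * J -> I * J -> C) (Y : J * K -> J * K -> C) x z :
  opcomp (op_tens_id X) (id_tens_op Y) x z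
  = \sum_c X x.1 (z.1.1, c) * Y (c, x.2) (z.1.2, z.2).
Proof.
rewrite /opcomp /op_tens_id /id_tens_op fsum3 /=.
rewrite (bigD1 z.1.1) //= [X in _ + X]big1 ?addr0; last first.
  move=> y1 ny1; apply: big1 => y2 _; apply: big1 => y3 _.
  by rewrite eq_sym (negbTE ny1) /= !mul0r mulr0.
apply: eq_bigr => y2 _; rewrite (bigD1 x.2) //= [X in _ + X]big1 ?addr0.
  by rewrite !eqxx !mulr1 mul1r.
by move=> y3 ny3; rewrite eq_sym (negbTE ny3) /= !mulr0 mul0r.
Qed.

Lemma op2 (I J K : finType) (X : I * J -> I * J -> C) (Y : J * K -> J * K -> C) x z :
  opcomp (id_tens_op Y) (op_tens_id X) x z
  = \sum_c Y (x.1.2, x.2) (c, z.2) * X (x.1.1, c) z.1.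
Proof.
rewrite /opcomp /op_tens_id /id_tens_op fsum3 /=.
rewrite (bigD1 x.1.1) //= [X in _ + X]big1 ?addr0; last first.
  move=> y1 ny1; apply: big1 => y2 _; apply: big1 => y3 _.
  by rewrite eq_sym (negbTE ny1) /= !mul0r.
apply: eq_bigr => y2 _; rewrite (bigD1 z.2) //= [X in _ + X]big1 ?addr0.
  by rewrite !eqxx !mulr1 mul1r.
by move=> y3 ny3; rewrite (negbTE ny3) /= !mulr0.
Qed.

End Gen.

Section Main.
Variables (R : realType) (n : nat) (W : WHAdata R n).
Local Notation C := (R[i]).
Local Notation A := 'rV[C]_n.
Local Notation e := (@bvec R n).
Local Notation mul := (wmul W).
Local Notation one := (wone W).
Local Notation Dl := (wcomul W).
Local Notation eps := (weps W).

Hypothesis HmulL : forall a x y z, mul (a *: x + y) z = a *: mul x z + mul y z.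
Hypothesis HmulR : forall a x y z, mul z (a *: x + y) = a *: mul z x + mul z y.
Hypothesis Hunit : forall x, mul one x = x /\ mul x one = x.
Hypothesis Heps : linear eps.

Lemma lin1_eps : lin1 eps.
Proof. by move=> a x y; rewrite Heps. Qed.

Lemma lin1_mulr h c : lin1 h -> lin1 (fun y => h (mul y c)).
Proof. by move=> hl a x y /=; rewrite HmulL hl. Qed.

Lemma lin1_mull h c : lin1 h -> lin1 (fun y => h (mul c y)).
Proof. by move=> hl a x y /=; rewrite HmulR hl. Qed.

Lemma collL h y : lin1 h -> h y = \sum_j one 0 j * h (mul y (e j)).
Proof.
move=> hl; rewrite -{1}[y](proj2 (Hunit y)).
exact: (expand one (lin1_mull y hl)).
Qed.

Lemma collR h y : lin1 h -> h y = \sum_j one 0 j * h (mul (e j) y).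
Proof.
move=> hl; rewrite -{1}[y](proj1 (Hunit y)).
exact: (expand one (lin1_mulr y hl)).
Qed.

Section Phi.
Variables (f1 f2 f3 : A -> C).
Hypotheses (h1 : lin1 f1) (h2 : lin1 f2) (h3 : lin1 f3).

Definition Phi (T : {ffun 'I_n * 'I_n * 'I_n -> C}) : C :=
  \sum_t T t * (f1 (e t.1.1) * f2 (e t.1.2) * f3 (e t.2)).

Lemma Phi_tens3 a b c : Phi (tens3 a b c) = f1 a * f2 b * f3 c.
Proof.
rewrite /Phi fsum3 (expand a h1) !big_distrl; apply: eq_bigr => p _.
rewrite (expand b h2) big_distrr big_distrl; apply: eq_bigr => q _.
rewrite (expand c h3) big_distrr; apply: eq_bigr => r _.
rewrite ffunE /=; ring.
Qed.

Lemma Phi_mul3 T U : Phi (mul3 W T U) =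
  \sum_s \sum_u T s * U u *
     (f1 (mul (e s.1.1) (e u.1.1)) * f2 (mul (e s.1.2) (e u.1.2))
      * f3 (mul (e s.2) (e u.2))).
Proof.
rewrite /Phi /mul3.
transitivity (\sum_t \sum_s \sum_u T s * U u *
   (tens3 (mul (e s.1.1) (e u.1.1)) (mul (e s.1.2) (e u.1.2)) (mul (e s.2) (e u.2)) t
    * (f1 (e t.1.1) * f2 (e t.1.2) * f3 (e t.2)))).
  apply: eq_bigr => t _; rewrite sum_ffunE big_distrl; apply: eq_bigr => s _.
  rewrite sum_ffunE big_distrl; apply: eq_bigr => u _.
  by rewrite ffunE mulrA.
rewrite exchange_big; apply: eq_bigr => s _.
rewrite exchange_big; apply: eq_bigr => u _.
by rewrite -mulr_sumr -Phi_tens3.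
Qed.

Lemma Phi_L : Phi (mul3 W (tens21 (Dl one) one) (tens12 one (Dl one))) =
  \sum_p \sum_q \sum_p' \sum_q' Dl one p q * Dl one p' q' *
     (f1 (e p) * f2 (mul (e q) (e p')) * f3 (e q')).
Proof.
rewrite Phi_mul3 fsum3; symmetry; apply: eq_bigr => p _; apply: eq_bigr => q _.
under [RHS]eq_bigr => r _ do rewrite fsum3.
rewrite [RHS]perm4; apply: eq_bigr => p' _; apply: eq_bigr => q' _.
rewrite (collL (e p) h1) (collR (e q') h3) dist_coll.
apply: eq_bigr => x _; apply: eq_bigr => y _.
rewrite !ffunE /=; ring.
Qed.

Lemma Phi_R : Phi (mul3 W (tens12 one (Dl one)) (tens21 (Dl one) one)) =
  \sum_p \sum_q \sum_p' \sum_q' Dl one p q * Dl one p' q' *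
     (f1 (e p) * f2 (mul (e p') (e q)) * f3 (e q')).
Proof.
rewrite Phi_mul3 fsum3; symmetry; rewrite swap22.
under eq_bigr => p' _ do under eq_bigr => q' _ do under eq_bigr => p _ do
  under eq_bigr => q _ do rewrite (collR (e p) h1) (collL (e q') h3) dist_coll.
rewrite -pull5; apply: eq_bigr => x _; apply: eq_bigr => p' _; apply: eq_bigr => q' _.
rewrite fsum3; apply: eq_bigr => p _; apply: eq_bigr => q _; apply: eq_bigr => y _.
rewrite !ffunE /=; ring.
Qed.

End Phi.

Hypothesis Heps3 : forall x y z,
  eps (mul (mul x y) z)
    = \sum_(j < n) \sum_(k < n) Dl y j k * eps (mul x (e j)) * eps (mul (e k) z)
  /\ eps (mul (mul x y) z)
    = \sum_(j < n) \sum_(k < n) Dl y j k * eps (mul x (e k)) * eps (mul (e j) z).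
Hypothesis H2a : comul2 W one = mul3 W (tens12 one (Dl one)) (tens21 (Dl one) one).
Hypothesis H2b : comul2 W one = mul3 W (tens21 (Dl one) one) (tens12 one (Dl one)).
Variables (dr : nat) (rho : A -> 'M[C]_dr).
Hypothesis Hrho : linear rho.
Hypothesis Hrhom : forall x y, rho (mul x y) = rho x *m rho y.
Variables (dv : nat) (v : 'I_dv -> 'I_dv -> A).
Hypothesis Hcorep : is_corep W v.

Lemma lin1_rho a b : lin1 (fun y => rho y a b).
Proof. by move=> c x y /=; rewrite Hrho !mxE. Qed.

Lemma corepD i j p q : Dl (v i j) p q = \sum_m v i m 0 p * v m j 0 q.
Proof.
by rewrite (proj1 (Hcorep i j)) summxE; apply: eq_bigr => m _; rewrite mxE.
Qed.

Lemma eL x y : eps (mul x y) = \sum_j y 0 j * eps (mul x (e j)).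
Proof. exact: (expand y (lin1_mull x lin1_eps)). Qed.

Lemma eR y z : eps (mul y z) = \sum_j y 0 j * eps (mul (e j) z).
Proof. exact: (expand y (lin1_mulr z lin1_eps)). Qed.

Lemma epsC1 x z i j :
  \sum_m eps (mul x (v i m)) * eps (mul (v m j) z) = eps (mul (mul x (v i j)) z).
Proof.
rewrite (proj1 (Heps3 x (v i j) z)).
under [RHS]eq_bigr => p _ do under eq_bigr => q _ do rewrite corepD big_distrl big_distrl /=.
under [RHS]eq_bigr => p _ do rewrite exchange_big.
rewrite [RHS]exchange_big; apply: eq_bigr => m _.
rewrite (eL x (v i m)) (eR (v m j) z) big_distrl; apply: eq_bigr => p _.
rewrite big_distrr; apply: eq_bigr => q _ /=; ring.
Qed.

Lemma epsC2 x z i j :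
  \sum_m eps (mul (v i m) z) * eps (mul x (v m j)) = eps (mul (mul x (v i j)) z).
Proof.
rewrite (proj2 (Heps3 x (v i j) z)).
under [RHS]eq_bigr => p _ do under eq_bigr => q _ do rewrite corepD big_distrl big_distrl /=.
under [RHS]eq_bigr => p _ do rewrite exchange_big.
rewrite [RHS]exchange_big; apply: eq_bigr => m _.
rewrite (eR (v i m) z) (eL x (v m j)) big_distrl; apply: eq_bigr => p _.
rewrite big_distrr; apply: eq_bigr => q _ /=; ring.
Qed.

Lemma dist1 (I : finType) (k a b : C) (s : I -> C) :
  k * (a * (\sum_c s c) * b) = \sum_c k * (a * s c * b).
Proof. by rewrite -big_distrr -big_distrl -big_distrr. Qed.

Lemma dist2 (I : finType) (k a b : C) (s : I -> C) :
  k * (a * b * (\sum_c s c)) = \sum_c k * (a * b * s c).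
Proof. by rewrite -big_distrr -big_distrr. Qed.

Lemma part1 (x z : 'I_dv * 'I_dr * 'I_dv) :
  opcomp (op_tens_id (Pop W v rho)) (id_tens_op (Qop W v rho)) x z
  = opcomp (id_tens_op (Qop W v rho)) (op_tens_id (Pop W v rho)) x z.
Proof.
case: x z => [[i a] k] [[j b] l]; rewrite op1 op2 /=.
pose f1 := fun y => eps (mul y (v i j)).
pose f2 := fun y => rho y a b.
pose f3 := fun y => eps (mul (v k l) y).
have hf1 : lin1 f1 := lin1_mulr (v i j) lin1_eps.
have hf2 : lin1 f2 := lin1_rho a b.
have hf3 : lin1 f3 := lin1_mull (v k l) lin1_eps.
have -> : \sum_c Pop W v rho (i, a) (j, c) * Qop W v rho (c, k) (b, l) =
  \sum_p \sum_q \sum_p' \sum_q' Dl one p q * Dl one p' q' *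
     (f1 (e p) * f2 (mul (e q) (e p')) * f3 (e q')).
  rewrite /Pop /Qop /=; under eq_bigr => c _ do rewrite (mul_sum2 (fun p q => Dl one p q * eps (mul (e p) (v i j)) * rho (e q) a c)).
  rewrite pull5; apply: eq_bigr => p _; apply: eq_bigr => q _.
  apply: eq_bigr => p' _; apply: eq_bigr => q' _.
  rewrite /f2 Hrhom mxE dist1; apply: eq_bigr => c _; rewrite /f1 /f3; ring.
have -> : \sum_c Qop W v rho (a, k) (c, l) * Pop W v rho (i, c) (j, b) =
  \sum_p \sum_q \sum_p' \sum_q' Dl one p q * Dl one p' q' *
     (f1 (e p) * f2 (mul (e p') (e q)) * f3 (e q')).
  rewrite /Pop /Qop /=; under eq_bigr => c _ do rewrite (mul_sum2 (fun p q => Dl one p q * rho (e p) a c * eps (mul (v k l) (e q)))).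
  rewrite pull5 swap22; apply: eq_bigr => p _; apply: eq_bigr => q _.
  apply: eq_bigr => p' _; apply: eq_bigr => q' _.
  rewrite /f2 Hrhom mxE dist1; apply: eq_bigr => c _; rewrite /f1 /f3; ring.
by rewrite -(Phi_L hf1 hf2 hf3) -(Phi_R hf1 hf2 hf3) -H2b H2a.
Qed.

Lemma part2 (x z : 'I_dr * 'I_dv * 'I_dr) :
  opcomp (op_tens_id (Qop W v rho)) (id_tens_op (Pop W v rho)) x z
  = opcomp (id_tens_op (Pop W v rho)) (op_tens_id (Qop W v rho)) x z.
Proof.
case: x z => [[a i] b] [[a' j] b']; rewrite op1 op2 /=.
have -> : \sum_c Qop W v rho (a, i) (a', c) * Pop W v rho (c, b) (j, b') =
  \sum_p \sum_q \sum_p' \sum_q' Dl one p q * Dl one p' q' *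
     (rho (e p) a a' * rho (e q') b b' * eps (mul (mul (e p') (v i j)) (e q))).
  rewrite /Pop /Qop /=; under eq_bigr => c _ do rewrite (mul_sum2 (fun p q => Dl one p q * rho (e p) a a' * eps (mul (v i c) (e q)))).
  rewrite pull5; apply: eq_bigr => p _; apply: eq_bigr => q _.
  apply: eq_bigr => p' _; apply: eq_bigr => q' _.
  rewrite -epsC2 dist2; apply: eq_bigr => c _; ring.
rewrite /Pop /Qop /=; under [RHS]eq_bigr => c _ do rewrite (mul_sum2 (fun p q => Dl one p q * eps (mul (e p) (v i c)) * rho (e q) b b')).
rewrite [RHS]pull5 [RHS]swap22; apply: eq_bigr => p _; apply: eq_bigr => q _.
apply: eq_bigr => p' _; apply: eq_bigr => q' _.
rewrite -epsC1 dist2; apply: eq_bigr => c _; ring.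
Qed.

End Main.

Theorem mainTheorem7 (R : realType) (n : nat) (W : WHAdata R n)
  (dr dv : nat) (rho : 'rV[R[i]]_n -> 'M[R[i]]_dr)
  (v : 'I_dv -> 'I_dv -> 'rV[R[i]]_n) :
  is_Cstar_WHA W ->
  is_star_rep W rho ->
  is_corep W v ->
  (forall i j, wS W (v i j) = wstar W (v j i)) ->
  (forall x z : 'I_dv * 'I_dr * 'I_dv,
     opcomp (op_tens_id (Pop W v rho)) (id_tens_op (Qop W v rho)) x z
     = opcomp (id_tens_op (Qop W v rho)) (op_tens_id (Pop W v rho)) x z) /\
  (forall x z : 'I_dr * 'I_dv * 'I_dr,
     opcomp (op_tens_id (Qop W v rho)) (id_tens_op (Pop W v rho)) x z
     = opcomp (id_tens_op (Pop W v rho)) (op_tens_id (Qop W v rho)) x z).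
Proof.
move=> [[[HB _ _ _ _] _] _ _ _ _] [Hrho Hrhom _] Hcorep _.
case: HB => [[[_ Hunit HmulL HmulR] [_ Heps _ _]] _ H2a H2b Heps3].
split=> x z.
  exact: (part1 HmulL HmulR Hunit Heps H2a H2b Hrho Hrhom v x z).
exact: (part2 HmulL HmulR Heps Heps3 rho Hcorep x z).
Qed.
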